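(* Let $n\ge1$ be an integer and $m=\lfloor n/2\rfloor+1$. Then $$\gcd_{1\le r\le m}\binom{n-m+r}{r}=1.$$ *)

(* Defs.v *)
From mathcomp Require Import all_boot.

(* Main.v *)
Require Import Defs.
From mathcomp Require Import all_boot zify.

Lemma aux k : forall s d, (forall r, s < r <= s + k.+1 -> d %| 'C(k + r, r)) -> d %| 1.
Proof.
elim: k => [|k IH] s d H.
  by have := H s.+1; rewrite add0n binn; apply; rewrite ltnSn addn1 leqnn.
apply: (IH s.+1) => r /andP [lr rr].
case: r lr rr => [//|r] lr rr.
have e := binS (k.+1 + r) r.
have h1 : d %| 'C(k.+1 + r.+1, r.+1) by apply: H; apply/andP; split; lia.
have h2 : d %| 'C(k.+1 + r, r).
  by apply: H; apply/andP; split; lia.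
move: h1; rewrite addnS e addnC (dvdn_addr _ h2).
by rewrite addSn addnS.
Qed.

Theorem lemma6 (n : nat) (hn : 1 <= n) :
  let m := n./2 + 1 in
  \big[gcdn/0]_(1 <= r < m.+1) 'C(n - m + r, r) = 1.
Proof.
move=> m; apply/eqP; rewrite -dvdn1.
apply: (aux (n - m) 0) => r /andP [lr rr].
have hm : n - m + 1 <= m.
  rewrite /m; have := odd_double_half n; case: (odd n) => /= e; lia.
have hr : r \in index_iota 1 m.+1.
  rewrite mem_index_iota; apply/andP; split; lia.
by rewrite (big_rem _ hr) /= dvdn_gcdl.
Qed.
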